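(* A fragment $F$ in the wait state which has a neighbor fragment $F'$ in the work state may enter the work state only after $F'$ has changed its state to the wait state.
   Context: A broadcast network is modeled as a connected graph G(V,E) with n nodes. In the fragment-level leader election algorithm, nodes are partitioned into fragments each with a candidate; id(F) = (size, candidate identity) ordered lexicographically; an external edge between F1 and F2 with id(F1) > id(F2) is outgoing for F1 and incoming for F2. Initially each node is a size-1 fragment in state wait. A fragment with an outgoing edge is in wait; a fragment in wait whose external edges are all incoming moves to work, where it counts its size new_size and compares with its maximal neighbor F'': if new_size > X · size(F'') (X > 1) it remains active, updates its size, makes all external edges outgoing and returns to wait; otherwise it joins F''. A fragment with no external edges is the leader. It has been shown that a fragment that was in work and remained active re-enters work only after each of its neighboring fragments has been in the work state. *)

(* Defs.v *)
(* Abstract model of the fragment-level leader election algorithm. *)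
From HB Require Import structures.
From mathcomp Require Import all_boot all_order all_algebra.
Set Implicit Arguments. Unset Strict Implicit. Unset Printing Implicit Defensive.
Import Order.TTheory GRing.Theory Num.Theory.

Inductive fstate := Wait | Work.

(* A global configuration on the node set 'I_n.
   - frag v  : the candidate of the fragment containing node v
               (a node x is the candidate of a fragment iff frag x = x);
   - fsize x : the size recorded by (the fragment of) candidate x;
   - fst x   : the state of (the fragment of) candidate x. *)
Record config (n : nat) := Config {
  frag : 'I_n -> 'I_n;
  fsize : 'I_n -> nat;
  fst : 'I_n -> fstate }.

Section Model.
Variable n : nat.
Variable adj : rel 'I_n.

Definition upd {A : Type} (f : 'I_n -> A) (x : 'I_n) (a : A) : 'I_n -> A :=
  fun y => if y == x then a else f y.

Definition init_config : config n := Config (fun v => v) (fun _ => 1%N) (fun _ => Wait).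

Definition is_frag (c : config n) (x : 'I_n) : Prop := frag c x = x.

(* id(F) = (size, candidate identity), lexicographic strict order *)
Definition fid_lt (c : config n) (x y : 'I_n) : Prop :=
  (fsize c x < fsize c y)%N \/ (fsize c x = fsize c y /\ (x < y)%N).

Definition neighbor (c : config n) (x y : 'I_n) : Prop :=
  is_frag c x /\ is_frag c y /\ x <> y /\
  exists u v, adj u v /\ frag c u = x /\ frag c v = y.

Definition frag_count (c : config n) (x : 'I_n) : nat :=
  #|[set v | frag c v == x]|.

Definition max_neighbor (c : config n) (x d : 'I_n) : Prop :=
  neighbor c x d /\ forall e, neighbor c x e -> e = d \/ fid_lt c e d.

Variable R : realFieldType.
Variable X : R.

Inductive step (c : config n) : config n -> Prop :=
| step_start x :
    (* wait -> work: all external edges of x are incoming (x not the leader) *)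
    is_frag c x -> fst c x = Wait ->
    (exists y, neighbor c x y) ->
    (forall y, neighbor c x y -> fid_lt c x y) ->
    step c (Config (frag c) (fsize c) (upd (fst c) x Work))
| step_active x d :
    is_frag c x -> fst c x = Work -> max_neighbor c x d ->
    (X * (fsize c d)%:R < (frag_count c x)%:R)%R ->
    step c (Config (frag c) (upd (fsize c) x (frag_count c x)) (upd (fst c) x Wait))
| step_join x d :
    is_frag c x -> fst c x = Work -> max_neighbor c x d ->
    ~ (X * (fsize c d)%:R < (frag_count c x)%:R)%R ->
    step c (Config (fun v => if frag c v == x then d else frag c v) (fsize c) (fst c)).

(* An (asynchronous, interleaved) execution from the initial configuration;
   stuttering steps are allowed. *)
Definition execution (e : nat -> config n) : Prop :=
  e 0%N = init_config /\ forall k, step (e k) (e k.+1) \/ e k.+1 = e k.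

Definition in_work (c : config n) (x : 'I_n) : Prop := is_frag c x /\ fst c x = Work.
Definition in_wait (c : config n) (x : 'I_n) : Prop := is_frag c x /\ fst c x = Wait.

End Model.

(* Main.v *)
Require Import Defs.
From HB Require Import structures.
From mathcomp Require Import all_boot all_order all_algebra.
From mathcomp Require Import zify.
From Stdlib Require Import Classical.
Import Order.TTheory GRing.Theory Num.Theory.
Set Implicit Arguments.

Lemma lt_asym n (c : config n) x y : fid_lt c x y -> fid_lt c y x -> False.
Proof. rewrite /fid_lt => [[h|[h1 h2]] [h'|[h1' h2']]]; lia. Qed.

Lemma nbr_sym n adj (c : config n) x y :
  symmetric adj -> neighbor adj c x y -> neighbor adj c y x.
Proof.
move=> hs [fx [fy [ne [u [v [a [hu hv]]]]]]].
split=>//; split=>//; split; first by move=> h; apply: ne.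
by exists v, u; rewrite hs.
Qed.

Definition inv n (adj : rel 'I_n) (c : config n) :=
  forall x y, in_work c x -> neighbor adj c x y -> fid_lt c x y.

Lemma work_nbr n adj (c : config n) x y : symmetric adj -> inv adj c ->
  in_work c x -> in_work c y -> neighbor adj c x y -> False.
Proof.
move=> hs hi wx wy nb.
exact: (lt_asym (hi _ _ wx nb) (hi _ _ wy (nbr_sym hs nb))).
Qed.

Lemma frag_back n adj (R : realFieldType) (X : R) (c c' : config n) z :
  step adj X c c' \/ c' = c -> is_frag c' z -> is_frag c z.
Proof.
case=> [[x Hfx Hwx Hex Hall | x d Hfx Hwx Hmax Hlt | x d Hfx Hwx Hmax Hnlt] | ->] //.
rewrite /is_frag /=; case: eqP => // h hd.
case: Hmax => [[_ [fd [ne _]]] _]; exfalso; apply: ne.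
by rewrite -h -hd; rewrite /is_frag in fd; rewrite -{2}fd hd.
Qed.

Lemma nbr_fwd n adj (R : realFieldType) (X : R) (c c' : config n) a b :
  step adj X c c' \/ c' = c -> is_frag c' a -> is_frag c' b ->
  neighbor adj c a b -> neighbor adj c' a b.
Proof.
case=> [[x Hfx Hwx Hex Hall | x d Hfx Hwx Hmax Hnlt | x d Hfx Hwx Hmax Hnlt] | ->] //.
move=> fa fb [_ [_ [ne [u [v [huv [hu hv]]]]]]].
have nx : forall w, is_frag (Config (fun v => if frag c v == x then d else frag c v) (fsize c) (fst c)) w -> w <> x.
  move=> w; rewrite /is_frag /= => h hw; subst w.
  case: Hmax => [[_ [_ [ne' _]]] _]; apply: ne'.
  by move: h; rewrite Hfx eqxx.
split=>//; split=>//; split=>//; exists u, v; split=>//=.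
rewrite hu hv; split.
  by case: eqP => // h; exfalso; exact: (nx a fa).
by case: eqP => // h; exfalso; exact: (nx b fb).
Qed.

Lemma inv_step n adj (R : realFieldType) (X : R) (c c' : config n) :
  symmetric adj -> inv adj c -> step adj X c c' \/ c' = c -> inv adj c'.
Proof.
move=> hs hi hst; move: (hst).
case=> [[x Hfx Hwx Hex Hall | x d Hfx Hwx Hmax Hnlt | x d Hfx Hwx Hmax Hnlt] | ->] //.
- move=> y z [fy]; rewrite /= /upd; case: eqP => [->|hyx] // wy nb.
    exact: Hall.
  exact: hi.
- move=> y z [fy]; rewrite /= /upd; case: eqP => [->|hyx] // wy nb.
  have wy' : in_work c y by [].
  have hz : z <> x.
    move=> hz; subst z; apply: (work_nbr hs hi wy' _ nb); by split.
  rewrite /fid_lt /=; rewrite /upd.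
  move: (hi _ _ wy' nb); rewrite /fid_lt.
  by case: eqP => // _; case: eqP.
- move=> y z wy nb.
  have fy : is_frag c y := frag_back (or_introl (step_join Hfx Hwx Hmax Hnlt)) (proj1 wy).
  have fz : is_frag c z := frag_back (or_introl (step_join Hfx Hwx Hmax Hnlt)) (proj1 (proj2 nb)).
  have wy' : in_work c y by split => //; case: wy.
  have yx : y <> x.
    move=> h; subst y; case: wy => h _; move: h; rewrite /is_frag /= Hfx eqxx.
    by move=> hdx; case: Hmax => [[_ [_ [ne' _]]] _]; apply: ne'; rewrite hdx.
  case: nb => _ [_ [ne [u [v [huv [hu hv]]]]]].
  move: hu hv => /=.
  case: eqP => hux.
    move=> hdy; exfalso.
    case: Hmax => [nxd _]; subst y.
    apply: (work_nbr hs hi (conj Hfx Hwx) wy' nxd).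
  move=> hu; case: eqP => hvx hv.
    subst z; exfalso.
    have nb' : neighbor adj c y x.
      split=>//; split=>//; split=>//; exists u, v; by split.
    exact: (work_nbr hs hi wy' (conj Hfx Hwx) nb').
  apply: hi => //; split=>//; split=>//; split=>//; exists u, v; by split.
Qed.

Lemma leave n adj (R : realFieldType) (X : R) (c c' : config n) y :
  symmetric adj -> inv adj c -> step adj X c c' \/ c' = c ->
  in_work c y -> ~ in_work c' y -> fst c' (frag c' y) = Wait.
Proof.
move=> hs hi hst; move: (hst).
case=> [[x Hfx Hwx Hex Hall | x d Hfx Hwx Hmax Hnlt | x d Hfx Hwx Hmax Hnlt] | ->] //.
- move=> [fy wy] nw; exfalso; apply: nw; split => //=; rewrite /upd.
  by case: eqP.
- move=> [fy wy] nw; rewrite /= fy /upd; case: eqP => // hyx.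
  by exfalso; apply: nw; split => //=; rewrite /upd; case: eqP.
- move=> [fy wy] nw /=; rewrite fy; case: eqP => hyx.
    subst y; case: Hmax => [nxd _].
    case hd: (fst c d) => //; exfalso.
    apply: (work_nbr hs hi (conj Hfx Hwx) _ nxd); split => //.
    by case: nxd => _ [].
  exfalso; apply: nw; split; last exact: wy.
  by rewrite /is_frag /= fy; case: eqP.
Qed.

Lemma start_lemma n adj (R : realFieldType) (X : R) (c c' : config n) x :
  step adj X c c' \/ c' = c -> fst c x = Wait -> fst c' x = Work ->
  forall z, neighbor adj c x z -> fid_lt c x z.
Proof.
case=> [[x0 Hfx Hwx Hex Hall | x0 d Hfx Hwx Hmax Hnlt | x0 d Hfx Hwx Hmax Hnlt] | ->] //=;
  rewrite /upd.
- move=> hw; case: eqP => [-> _|_]; [exact: Hall | by rewrite hw].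
- by move=> hw; case: eqP => //; rewrite hw.
- by move=> ->.
- by move=> ->.
Qed.

Theorem corollary4 (R : realFieldType) (X : R) (n : nat) (adj : rel 'I_n) :
  (1 < X)%R -> symmetric adj -> irreflexive adj -> (forall u v, connect adj u v) ->
  forall (e : nat -> config n), execution adj X e ->
  forall (t : nat) (F F' : 'I_n),
    in_wait (e t) F -> in_work (e t) F' -> neighbor adj (e t) F F' ->
    forall t' : nat, (t < t')%N -> in_work (e t') F ->
    exists s : nat, (t <= s < t')%N /\
      (forall k, (t <= k <= s)%N -> in_work (e k) F') /\
      fst (e s.+1) (frag (e s.+1) F') = Wait.
Proof.
move=> _ hs _ _ e [e0 hst] t F F' [fF wF] wF' nb t' tt' wFt'.
have hinv : forall k, inv adj (e k).
  elim=> [|k IH]; first by rewrite e0 => x y [_ /=].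
  exact: (inv_step hs IH (hst k)).
have fragF : forall j, (j <= t' - t)%N -> is_frag (e (t' - j)) F.
  elim=> [|j IH] hj; first by rewrite subn0; case: wFt'.
  have := IH (ltnW hj).
  have -> : (t' - j = (t' - j.+1).+1)%N by lia.
  exact: frag_back (hst _).
have fragF2 : forall k, (t <= k <= t')%N -> is_frag (e k) F.
  move=> k hk; have := fragF (t' - k)%N ltac:(lia).
  by have -> : (t' - (t' - k) = k)%N by lia.
have key : forall j, (forall k, (t <= k <= t + j)%N -> in_work (e k) F') \/
   exists s, (t <= s < t + j)%N /\ (forall k, (t <= k <= s)%N -> in_work (e k) F') /\
     ~ in_work (e s.+1) F'.
  elim=> [|j [IH|IH]].
  - left => k hk; have -> : k = t by lia. by [].
  - case: (classic (in_work (e (t + j).+1) F')) => h.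
      left => k hk; case: (ltnP k (t + j).+1) => hk'.
        by apply: IH; lia.
      by have -> : k = (t + j).+1 by lia.
    right; exists (t + j); split; first lia.
    split => //; move=> k hk; apply: IH; lia.
  - right; case: IH => s [h1 h2]; exists s; split => //; lia.
case: (key (t' - t)%N) => [allw | [s [h1 [h2 h3]]]].
  exfalso.
  have nbk : forall j, (j <= t' - t)%N -> neighbor adj (e (t + j)) F F'.
    elim=> [|j IH] hj; first by rewrite addn0.
    rewrite addnS; apply: (nbr_fwd (hst _)).
    - apply: fragF2; lia.
    - by case: (allw (t + j).+1 ltac:(lia)).
    - apply: IH; lia.
  have sw : exists j, (j < t' - t)%N /\ fst (e (t + j)) F = Wait /\ fst (e (t + j).+1) F = Work.
    have : forall j, (j <= t' - t)%N -> fst (e (t + j)) F = Wait \/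
      exists i, (i < j)%N /\ fst (e (t + i)) F = Wait /\ fst (e (t + i).+1) F = Work.
      elim=> [|j IH] hj; first by left; rewrite addn0.
      case: (IH (ltnW hj)) => [hw|[i [hi1 hi2]]].
        case hf: (fst (e (t + j).+1) F); first by left; rewrite addnS.
        by right; exists j; split.
      by right; exists i; split => //; lia.
    move=> /(_ (t' - t)%N (leqnn _)) [hw|[i [hi1 hi2]]].
      have ht : (t + (t' - t) = t')%N by lia.
      by move: hw; rewrite ht; case: wFt' => _ ->.
    by exists i.
  case: sw => j [hj [hw1 hw2]].
  have nbj := nbk j (ltnW hj).
  have lt1 := start_lemma (hst (t + j)) hw1 hw2 nbj.
  have wj : in_work (e (t + j)) F' by apply: allw; lia.
  have lt2 := hinv _ _ _ wj (nbr_sym hs nbj).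
  exact: (lt_asym lt1 lt2).
exists s; split; first lia.
split => //.
apply: (leave hs (hinv s) (hst s)) => //.
apply: h2; lia.
Qed.
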